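(* There is a deterministic algorithm for the Locate problem that runs in $k$ rounds and asks at most $k\,n^{1/k}$ rank queries on every input of length $n$.
   Context: Locate problem in the rank query model: there is a vector $\vec{x}=(x_1,\ldots,x_n)$ whose ranks form an unknown permutation of $\{1,\ldots,n\}$; an index $i$ is given and the goal is to determine $\mathrm{rank}(x_i)$. Queries have the form ''How is $\mathrm{rank}(x_j)$ compared to $m$?'' ($j,m\in\{1,\ldots,n\}$), with answer ''$<$'', ''$=$'' or ''$>$''. An algorithm runs in $k$ rounds if in each of $k$ rounds it submits a set of queries chosen depending only on answers of earlier rounds, then receives all their answers. *)

(* Defs.v *)
From Stdlib Require Import Reals.
From mathcomp Require Import all_boot all_fingroup.
Set Implicit Arguments. Unset Strict Implicit. Unset Printing Implicit Defensive.

(* Conventions (0-based encoding of the 1-based ranks of the paper):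
   - indices j : 'I_n stand for x_{j+1};
   - the unknown rank vector is a permutation s : {perm 'I_n}, with
     rank(x_{j+1}) = (s j) + 1;
   - a query (j, m) : 'I_n * 'I_n stands for
     "How is rank(x_{j+1}) compared to m+1?", i.e. compare s j with m. *)

Definition query (n : nat) := ('I_n * 'I_n)%type.

Definition answer (n : nat) (s : {perm 'I_n}) (q : query n) : comparison :=
  let: (j, m) := q in
  if (s j < m)%N then Lt else if s j == m then Eq else Gt.

Definition history (n : nat) := seq (seq (query n * comparison)).

(* A deterministic multi-round algorithm for Locate on inputs of length n:
   given the target index i and the answers of the earlier rounds, it chooses
   the (finite) list of queries of the next round; at the end it outputs the
   rank (0-based) from the full history. *)
Record algorithm (n : nat) := Algorithm {
  alg_queries : 'I_n -> history n -> seq (query n);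
  alg_output  : 'I_n -> history n -> 'I_n }.

Fixpoint run_rounds (n : nat) (A : algorithm n) (i : 'I_n) (s : {perm 'I_n})
    (r : nat) (h : history n) : history n :=
  match r with
  | 0 => h
  | r'.+1 =>
      let qs := alg_queries A i h in
      run_rounds A i s r' (rcons h [seq (q, answer s q) | q <- qs])
  end.

Definition transcript (n : nat) (A : algorithm n) (k : nat) (i : 'I_n)
    (s : {perm 'I_n}) : history n := run_rounds A i s k [::].

Definition num_queries (n : nat) (h : history n) : nat := sumn (map size h).

(* Main.v *)
Require Import Defs.
From Stdlib Require Import Reals.
From mathcomp Require Import all_boot all_fingroup zify.
Set Implicit Arguments. Unset Strict Implicit. Unset Printing Implicit Defensive.

Section Alg.
Variables (k b n' : nat).

Definition lo (h : history n'.+1) : nat :=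
  \max_(e <- flatten h | if e.2 is Lt then false else true) (e.1.2 : nat).

Definition Q (i : 'I_n'.+1) (h : history n'.+1) : seq (query n'.+1) :=
  [seq (i, inord (lo h + c * b ^ (k - (size h).+1))) | c <- iota 1 b.-1].

Definition Alg : algorithm n'.+1 := Algorithm Q (fun i h => inord (lo h)).

Variables (i : 'I_n'.+1) (s : {perm 'I_n'.+1}).
Hypothesis b_gt0 : 0 < b.

Definition Inv (h : history n'.+1) :=
  lo h = s i %/ b ^ (k - size h) * b ^ (k - size h) /\
  num_queries h = size h * b.-1.

Lemma key (L B si N : nat) : 0 < B -> si < N -> L = si %/ (b * B) * (b * B) ->
  maxn L (\max_(c <- iota 1 b.-1 | ~~ (si < (if L + c * B < N then L + c * B else 0)))
            (if L + c * B < N then L + c * B else 0)) = si %/ B * B.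
Proof.
move=> B0 siN ->.
set q := si %/ B.
have hL : si %/ (b * B) * (b * B) = q %/ b * b * B by rewrite (mulnC b) divnMA -/q mulnA mulnAC.
rewrite hL.
apply/eqP; rewrite eqn_leq; apply/andP; split.
- rewrite geq_max; apply/andP; split.
    by rewrite leq_mul2r (leq_divM q b) orbT.
  apply/bigmax_leqP_seq => c _.
  case: ifP => // _; rewrite -leqNgt => hc.
  have -> : q %/ b * b * B + c * B = (q %/ b * b + c) * B by rewrite mulnDl.
  rewrite leq_mul2r; apply/orP; right.
  by rewrite /q leq_divRL //; rewrite mulnDl.
- have hq : q = q %/ b * b + q %% b by rewrite -divn_eq.
  have hqb : q %% b < b by rewrite ltn_mod.
  have hT : q * B <= si by rewrite /q leq_divM.
  case hm: (q %% b) => [|m].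
    by rewrite {1}hq hm addn0 leq_maxl.
  apply: leq_trans (leq_maxr _ _).
  have hv : q %/ b * b * B + m.+1 * B = q * B by rewrite -mulnDl -hm -divn_eq.
  have hin : m.+1 \in iota 1 b.-1 by rewrite mem_iota; lia.
  set F := fun c => if q %/ b * b * B + c * B < N then q %/ b * b * B + c * B else 0.
  have hF : F m.+1 = q * B by rewrite /F hv ifT //; lia.
  rewrite -hF. apply: (@leq_bigmax_seq _ _ (fun c => ~~ (si < F c)) F _ hin).
  by rewrite hF -leqNgt.
Qed.

Lemma lo_rcons h x : lo (rcons h x) =
  maxn (lo h) (\max_(e <- x | if e.2 is Lt then false else true) (e.1.2 : nat)).
Proof. by rewrite /lo flatten_rcons big_cat. Qed.

Lemma step h : size h < k -> Inv h ->
  Inv (rcons h [seq (q, answer s q) | q <- alg_queries Alg i h]).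
Proof.
move=> hs [hlo hnum]; split; last first.
  rewrite /num_queries map_rcons -cats1 sumn_cat /= -/(num_queries h) hnum.
  by rewrite size_map size_map size_iota size_rcons addn0 mulSn addnC.
rewrite lo_rcons /= /Q !big_map size_rcons.
have hk : k - size h = (k - (size h).+1).+1 by lia.

set B := b ^ (k - (size h).+1).
have B0 : 0 < B by rewrite expn_gt0 b_gt0.
rewrite -(key (L := lo h) (N := n'.+1) B0 (ltn_ord (s i))); last by rewrite hlo hk expnS.
congr maxn; apply: eq_big => c /=.
  by rewrite /answer val_insubd; case: ifP => _ //; case: ifP => _ //; case: ifP.
by move=> _; rewrite val_insubd.
Qed.

Lemma run_inv r h : size h + r <= k -> Inv h ->
  Inv (run_rounds Alg i s r h) /\ size (run_rounds Alg i s r h) = size h + r.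
Proof.
elim: r h => [|r IH] h hs hI /=; first by rewrite addn0.
have [] := IH (rcons h [seq (q, answer s q) | q <- alg_queries Alg i h]).
- by rewrite size_rcons; lia.
- by apply: step => //; lia.
by move=> ? ->; rewrite size_rcons addSnnS.
Qed.
End Alg.

Section RealPart.
Local Open Scope R_scope.
Lemma INR_expn m e : INR (m ^ e)%N = pow (INR m) e.
Proof. elim: e => [|e IH] //=; by rewrite expnS mult_INR IH. Qed.

Lemma real_bound k c n : (0 < k)%N -> (c ^ k < n)%N ->
  Rle (INR c) (Rpower (INR n) (Rinv (INR k))).
Proof.
move=> hk hc.
case: c hc => [|c] hc.
  by apply: Rlt_le; rewrite /Rpower; apply: exp_pos.
have x0 : (0 < INR c.+1) by apply: lt_0_INR; apply/ltP.
have hkR : INR k <> 0 by apply: not_0_INR; lia.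
have -> : INR c.+1 = Rpower (INR (c.+1 ^ k)%N) (Rinv (INR k)).
  rewrite INR_expn -Rpower_pow // Rpower_mult Rinv_r // Rpower_1 //.
apply: Rle_Rpower_l.
  by apply: Rlt_le; apply: Rinv_0_lt_compat; apply: lt_0_INR; apply/ltP.
split.
  by apply: lt_0_INR; apply/ltP; rewrite expn_gt0.
by apply: le_INR; apply/leP; apply: ltnW.
Qed.
End RealPart.

Theorem proposition1 (k : nat) (hk : (0 < k)%N) (n : nat) :
  exists A : algorithm n,
    forall (i : 'I_n) (s : {perm 'I_n}),
      alg_output A i (transcript A k i s) = s i /\
      Rle (INR (num_queries (transcript A k i s)))
          (Rmult (INR k) (Rpower (INR n) (Rinv (INR k)))).
Proof.
case: n => [|n'].
  by exists (Algorithm (fun _ _ => [::]) (fun i _ => i)); case.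
have hex : exists b, (n'.+1 <= b ^ k)%N.
  exists n'.+1; case: k hk => // k' _; rewrite expnS; apply: leq_pmulr.
  by rewrite expn_gt0.
case: (ex_minnP hex) => b hb hmin.
have b0 : (0 < b)%N.
  case: b hb hmin => // hb; rewrite exp0n // in hb.
have hb1 : (b.-1 ^ k < n'.+1)%N.
  rewrite ltnNge; apply/negP => /hmin; lia.
exists (Alg k b n') => i s.
have hI0 : Inv k b i s [::].
  split => //; rewrite /lo big_nil subn0 divn_small //.
  exact: leq_trans (ltn_ord (s i)) hb.
have [[hlo hnum] hsz] := run_inv b0 (r := k) (h := [::]) (leqnn _) hI0.
rewrite /transcript; split.
  by apply: val_inj; rewrite /= hlo hsz subnn expn0 divn1 muln1 inordK.
rewrite hnum hsz add0n mult_INR.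
apply: Rmult_le_compat_l; first exact: pos_INR.
exact: (real_bound hk hb1).
Qed.
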